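(* Let $\Gamma$ be a distance-regular graph with classical parameters $(D,b,\alpha,\beta)$ such that $b\ge2$ and $D\ge3$, which is geometric with respect to a set $\mathcal C$ of Delsarte cliques. Then: for each $j\in\{0,1,\dots,D-1\}$, each $C\in\mathcal C$ and each vertex $x$ at distance $j$ from $C$, the number of vertices of $C$ at distance $j$ from $x$ is $\phi_j=1+\alpha[j]$; and for each $j\in\{1,\dots,D\}$ and vertices $x,y$ at distance $j$, the number of cliques in $\mathcal C$ containing $x$ and at distance $j-1$ from $y$ is $\tau_j=[j]$.
   Context: Distance-regular graph with intersection numbers $b_i,c_i$, valency $k=b_0$. For integer $b\ne1$, $[j]=\frac{b^j-1}{b-1}$. Classical parameters $(D,b,\alpha,\beta)$: diameter $D$, $b_i=([D]-[i])(\beta-\alpha[i])$, $c_i=[i](1+\alpha[i-1])$. A Delsarte clique is a clique with $1+\frac{k}{-\theta_{\min}}$ vertices, $\theta_{\min}$ the smallest adjacency eigenvalue; geometric with respect to $\mathcal C$ means every edge lies in exactly one member of $\mathcal C$. Distance from a vertex to a clique $C$: $\min_{y\in C}d(x,y)$. *)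

(* Defs.v *)
From HB Require Import structures.
From mathcomp Require Import all_boot all_order all_algebra.
Set Implicit Arguments. Unset Strict Implicit. Unset Printing Implicit Defensive.
Import Order.TTheory GRing.Theory Num.Theory.

Section Graph.
Variable n : nat.
Variable e : rel 'I_n.

Definition simple_graph : Prop := symmetric e /\ irreflexive e.

Fixpoint ball (x : 'I_n) (m : nat) : {set 'I_n} :=
  match m with
  | 0 => [set x]
  | m'.+1 => ball x m' :|: [set z | [exists y in ball x m', e y z]]
  end.

(* graph distance (correct for connected graphs; all distances are < n) *)
Definition gdist (x y : 'I_n) : nat := find (fun m => y \in ball x m) (iota 0 n).

Definition connected_graph : Prop := forall x y, connect e x y.

Definition diameter_is (D : nat) : Prop :=
  (exists x y, gdist x y = D) /\ (forall x y, gdist x y <= D).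

Definition distance_regular (D : nat) (bi ci : nat -> nat) : Prop :=
  [/\ simple_graph, connected_graph, diameter_is D,
      (forall x y, 1 <= gdist x y ->
         #|[set z | e y z & gdist x z == (gdist x y).-1]| = ci (gdist x y)) &
      (forall x y, gdist x y < D ->
         #|[set z | e y z & gdist x z == (gdist x y).+1]| = bi (gdist x y))].

Definition clique (C : {set 'I_n}) : Prop :=
  forall x y, x \in C -> y \in C -> x != y -> e x y.

(* distance from a vertex to a (nonempty) set of vertices *)
Definition gdistC (x : 'I_n) (C : {set 'I_n}) : nat :=
  \big[minn/n]_(y in C) gdist x y.

Variable R : rcfType.

Definition adjmx : 'M[R]_n := \matrix_(i, j) ((e i j)%:R)%R.

Definition min_eigenvalue (theta : R) : Prop :=
  eigenvalue adjmx theta /\ (forall t, eigenvalue adjmx t -> (theta <= t)%R).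

Definition delsarte_clique (k : nat) (C : {set 'I_n}) : Prop :=
  clique C /\
  exists theta, min_eigenvalue theta /\
    (#|C|%:R = 1 + k%:R / (- theta) :> R)%R.

Definition geometric_wrt (k : nat) (CC : {set {set 'I_n}}) : Prop :=
  (forall C, C \in CC -> delsarte_clique k C) /\
  (forall x y, e x y -> #|[set C in CC | (x \in C) && (y \in C)]| = 1%N).

End Graph.

Definition gbr (R : fieldType) (b : nat) (j : nat) : R :=
  (((b%:R) ^+ j - 1) / (b%:R - 1))%R.

Definition classical_params (R : fieldType) (D : nat) (bi ci : nat -> nat)
  (b : nat) (alpha beta : R) : Prop :=
  (forall i, (i < D)%N -> (bi i)%:R = (gbr R b D - gbr R b i) * (beta - alpha * gbr R b i))%R /\
  (forall i, (1 <= i <= D)%N -> (ci i)%:R = gbr R b i * (1 + alpha * gbr R b i.-1))%R.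

(* Main.v *)
Require Import Defs.
From HB Require Import structures.
From mathcomp Require Import all_boot all_order all_algebra.
Import Order.TTheory GRing.Theory Num.Theory.
From mathcomp Require Import zify ring lra.
Set Implicit Arguments. Unset Strict Implicit. Unset Printing Implicit Defensive.

Section GraphLib.
Variable n : nat.
Variable e : rel 'I_n.
Hypothesis esy : symmetric e.
Hypothesis eirr : irreflexive e.
Hypothesis econn : forall x y, connect e x y.

Local Notation ball := (ball e).
Local Notation gd := (gdist e).

Lemma ballS x m y : (y \in ball x m.+1) = (y \in ball x m) || [exists z in ball x m, e z y].
Proof. by rewrite /= in_setU in_set. Qed.

Lemma ball_self x m : x \in ball x m.
Proof. elim: m => [|m IH]; first by rewrite /= in_set1. by rewrite ballS IH. Qed.

Lemma ball_mono x m m' : m <= m' -> {subset ball x m <= ball x m'}.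
Proof.
move=> le y; elim: m' le => [|m' IH]; first by rewrite leqn0 => /eqP ->.
rewrite leq_eqVlt => /orP [/eqP -> //|lt] yb.
by rewrite ballS IH.
Qed.

Lemma ball_edge x m y z : y \in ball x m -> e y z -> z \in ball x m.+1.
Proof. move=> yb eyz; rewrite ballS; apply/orP; right; apply/existsP; exists y; by rewrite yb. Qed.

Lemma ball_trans x y z m m' : y \in ball x m -> z \in ball y m' -> z \in ball x (m + m').
Proof.
move=> yb; elim: m' z => [|m' IH] z.
  by rewrite /= in_set1 addn0 => /eqP ->.
rewrite ballS => /orP [/IH zb|/existsP [w /andP [wb ewz]]].
  by rewrite addnS; exact: (ball_mono (leqnSn _) zb).
by rewrite addnS; apply: ball_edge (IH _ wb) ewz.
Qed.

Lemma ball_sym x y m : y \in ball x m -> x \in ball y m.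
Proof.
elim: m y => [|m IH] y.
  by rewrite /= !in_set1 eq_sym.
rewrite ballS => /orP [/IH xb|/existsP [w /andP [wb ewy]]].
  exact: (ball_mono (leqnSn _) xb).
have h1 : w \in ball y 1 by apply: ball_edge (ball_self _ _) _; rewrite esy.
have := ball_trans h1 (IH _ wb); by rewrite add1n.
Qed.

Lemma path_ball p x : path e x p -> last x p \in ball x (size p).
Proof.
elim: p x => [|z p IH] x /=; first by rewrite in_set1.
move=> /andP [exz pp].
have h1 : z \in ball x 1 by apply: ball_edge (ball_self _ _) exz.
have := ball_trans h1 (IH _ pp); by rewrite add1n.
Qed.

Lemma ball_stable x t : ball x t = ball x t.+1 -> forall t', ball x (t + t') = ball x t.
Proof.
move=> h t'; elim: t' => [|t' IH]; first by rewrite addn0.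
rewrite addnS.
suff -> : ball x (t + t').+1 = ball x t.+1 by rewrite -h.
by rewrite /= -/(ball x (t+t')) IH.
Qed.

Lemma ball_grow x t : t < #|ball x t| \/ (forall t', ball x (t + t') = ball x t).
Proof.
elim: t => [|t [lt|st]]; first by left; rewrite /= cards1.
- case: (boolP (ball x t.+1 == ball x t)) => [/eqP h|h].
    right => t'; have := ball_stable (esym h) t'.+1.
    by rewrite addSnnS h.
  left; apply: (leq_ltn_trans lt); apply: proper_card.
  rewrite properEneq eq_sym h /=; apply/subsetP => y; exact: ball_mono (leqnSn _) y.
- right => t'; rewrite addSn -addnS st.
  by have := st 1; rewrite addn1 => ->.
Qed.

Lemma ball_all x y : y \in ball x n.-1.
Proof.
have [p pp ->] := connectP (econn x y).
have yb := path_ball pp.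
case: (ball_grow x n.-1) => [lt|st].
  have : #|ball x n.-1| <= n by rewrite -[n in _ <= n]card_ord max_card.
  move=> le.
  have n0 : 0 < n by have := ltn_ord x; lia.
  have cn : #|ball x n.-1| = #|'I_n| by rewrite card_ord; lia.
  have : ball x n.-1 = setT by apply/setP/subset_cardP; rewrite ?cardsT ?subsetT //.
  by move=> ->; rewrite in_setT.
case: (leqP (size p) n.-1) => le; first exact: (ball_mono le).
rewrite -(st (size p - n.-1)) subnKC ?yb //; exact: ltnW.
Qed.

Lemma gd_has x y : has (fun m => y \in ball x m) (iota 0 n).
Proof.
have n0 : 0 < n by have := ltn_ord x; lia.
apply/seq.hasP; exists n.-1.
  rewrite mem_iota; lia.
exact: ball_all.
Qed.

Lemma gd_lt x y : gd x y < n.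
Proof. by have := gd_has x y; rewrite has_find size_iota. Qed.

Lemma gd_ball x y : y \in ball x (gd x y).
Proof.
have := nth_find 0 (gd_has x y); rewrite nth_iota ?add0n //.
by have := gd_lt x y; rewrite /gdist.
Qed.

Lemma gd_min x y i : i < gd x y -> y \notin ball x i.
Proof.
move=> lt; have := before_find 0 lt; rewrite nth_iota ?add0n => [->//|].
exact: ltn_trans lt (gd_lt x y).
Qed.

Lemma ballE x y m : (y \in ball x m) = (gd x y <= m).
Proof.
apply/idP/idP => [yb|le]; last exact: ball_mono le _ (gd_ball x y).
by rewrite leqNgt; apply/negP => /gd_min; rewrite yb.
Qed.

Lemma gd_sym x y : gd x y = gd y x.
Proof.
apply/eqP; rewrite eqn_leq -!ballE; apply/andP; split; apply: ball_sym; by rewrite ballE.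
Qed.

Lemma gd_xx x : gd x x = 0.
Proof. by apply/eqP; rewrite -leqn0 -ballE ball_self. Qed.

Lemma gd_eq0 x y : (gd x y == 0) = (x == y).
Proof.
apply/idP/idP => [|/eqP ->]; last by rewrite gd_xx.
by rewrite -leqn0 -ballE /= in_set1 eq_sym.
Qed.

Lemma gd_edge x y : e x y -> gd x y = 1.
Proof.
move=> exy; apply/eqP; rewrite eqn_leq -ballE (ball_edge (ball_self _ _) exy) /=.
rewrite lt0n gd_eq0; apply/negP => /eqP xy; by rewrite xy eirr in exy.
Qed.

Lemma gd1E x y : (gd x y == 1) = e x y.
Proof.
apply/idP/idP => [/eqP h|/gd_edge -> //].
have := gd_ball x y; rewrite h ballS => /orP [|/existsP [z /andP [zb ezy]]].
  by rewrite ballE h.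
by move: zb; rewrite /= in_set1 => /eqP <-.
Qed.

Lemma gd_tri x y z : e y z -> gd x z <= (gd x y).+1.
Proof. move=> eyz; rewrite -ballE; exact: ball_edge (gd_ball x y) eyz. Qed.

Lemma gd_edge_range x y z : e y z -> (gd x y).-1 <= gd x z <= (gd x y).+1.
Proof.
move=> eyz; rewrite gd_tri //=.
have := gd_tri x (y:=z) (z:=y); rewrite esy => /(_ eyz); lia.
Qed.

Lemma gd_pred x y j : gd x y = j.+1 -> exists z, e z y /\ gd x z = j.
Proof.
move=> h; have := gd_ball x y; rewrite h ballS => /orP [|/existsP [z /andP [zb ezy]]].
  by rewrite ballE h ltnn.
exists z; split => //; apply/eqP; rewrite eqn_leq -ballE zb /=.
have := gd_tri x ezy; rewrite h; lia.
Qed.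

Lemma bigmin_le_seq (T : eqType) (s : seq T) (P : pred T) (F : T -> nat) m y :
  y \in s -> P y -> \big[minn/m]_(i <- s | P i) F i <= F y.
Proof.
elim: s => [//|a s IH]; rewrite inE big_cons => /orP [/eqP <- ->|ys Py].
  exact: geq_minl.
case: (P a); last exact: IH.
by apply: leq_trans (geq_minr _ _) (IH ys Py).
Qed.

Lemma gC_le x (C : {set 'I_n}) y : y \in C -> gdistC e x C <= gd x y.
Proof. by move=> yC; rewrite /gdistC; apply: bigmin_le_seq; rewrite ?mem_index_enum. Qed.

Lemma gC_ge x (C : {set 'I_n}) t : t <= n -> (forall y, y \in C -> t <= gd x y) -> t <= gdistC e x C.
Proof.
move=> tn h; rewrite /gdistC; elim/big_ind: _ => //.
  by move=> a b ha hb; rewrite leq_min ha hb.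
Qed.

Lemma gC_att x (C : {set 'I_n}) : gdistC e x C < n -> exists2 y, y \in C & gdistC e x C = gd x y.
Proof.
rewrite /gdistC; elim/big_ind: _ => [|a b ha hb|y yC _]; first by rewrite ltnn.
  move=> lt; have [h|h] := leqP a b.
    have e1 : minn a b = a by apply/minn_idPl.
    by rewrite e1 in lt *; exact: ha lt.
  have e1 : minn a b = b by apply/minn_idPr; exact: ltnW.
  by rewrite e1 in lt *; exact: hb lt.
by exists y.
Qed.

Lemma gC_eq x (C : {set 'I_n}) y t : y \in C -> gd x y = t -> (forall w, w \in C -> t <= gd x w) ->
  gdistC e x C = t.
Proof.
move=> yC h hall; apply/eqP; rewrite eqn_leq; apply/andP; split.
  by rewrite -h; exact: gC_le.
apply: gC_ge => //; rewrite -h; exact: ltnW (gd_lt _ _).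
Qed.
End GraphLib.

Lemma sum_bool (T : finType) (P Q : pred T) :
  \sum_(i | P i) (Q i : nat) = #|[set i | P i & Q i]|.
Proof. rewrite -sum1dep_card big_mkcondr /=; apply: eq_bigr => i _; by case: (Q i). Qed.

Lemma sum_boolR (R : pzSemiRingType) (T : finType) (P Q : pred T) :
  (\sum_(i | P i) (Q i)%:R = #|[set i | P i & Q i]|%:R :> R)%R.
Proof. by rewrite -sum_bool natr_sum. Qed.


Ltac decide_eqs :=
  repeat (match goal with |- context [?a == ?b] =>
    first [ have -> : (a == b) = true by apply/eqP; lia
          | have -> : (a == b) = false by apply/negbTE/eqP; lia ] end).

Lemma indsw (R : pzRingType) (F G H : nat -> R) i j : (1 <= i)%N ->
  (F j * (j.-1 == i)%:R + G j * (j == i)%:R + H j * (j.+1 == i)%:R =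
  F i.+1 * (j == i.+1)%:R + G i * (j == i)%:R + H i.-1 * (j == i.-1)%:R)%R.
Proof.
move=> i1.
case: (eqVneq j i.+1) => [->|n1]; first by decide_eqs; rewrite /= !mulr0 !mulr1 !addr0.
case: (eqVneq j i) => [->|n2]; first by decide_eqs; rewrite /= !mulr0 !mulr1 !addr0 !add0r.
case: (eqVneq j i.-1) => [->|n3]; first by decide_eqs; rewrite /= !mulr0 !mulr1 !add0r.
by decide_eqs; rewrite /= !mulr0 !addr0.
Qed.

Section Main.
Variables (R : rcfType) (n : nat) (e : rel 'I_n) (D : nat) (bi ci : nat -> nat)
  (b : nat) (alpha beta : R) (CC : {set {set 'I_n}}).
Hypothesis hdr : distance_regular e D bi ci.
Hypothesis hcp : classical_params D bi ci b alpha beta.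
Hypothesis hb : (2 <= b)%N.
Hypothesis hD : (3 <= D)%N.
Hypothesis hgeo : geometric_wrt e R (bi 0) CC.

Local Notation gd := (gdist e).
Local Open Scope ring_scope.

Lemma esy : symmetric e. Proof. by case: hdr => [[]]. Qed.
Lemma eirr : irreflexive e. Proof. by case: hdr => [[]]. Qed.
Lemma econn : forall x y, connect e x y. Proof. by case: hdr. Qed.
Lemma gdD x y : (gd x y <= D)%N. Proof. by case: hdr => _ _ [_ H]. Qed.
Lemma hc x y : (1 <= gd x y)%N ->
  #|[set z | e y z & gd x z == (gd x y).-1]| = ci (gd x y).
Proof. by move=> h; case: hdr => _ _ _ H _; exact: H. Qed.
Lemma hbb x y : (gd x y < D)%N ->
  #|[set z | e y z & gd x z == (gd x y).+1]| = bi (gd x y).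
Proof. by move=> h; case: hdr => _ _ _ _ H; exact: H. Qed.

Lemma Mxx x : gd x x = 0%N. Proof. exact: (gd_xx econn). Qed.
Lemma Msym x y : gd x y = gd y x. Proof. exact: (gd_sym esy econn). Qed.
Lemma Medge x y : e x y -> gd x y = 1%N. Proof. exact: (gd_edge eirr econn). Qed.
Lemma Meq0 x y : (gd x y == 0%N) = (x == y). Proof. exact: (gd_eq0 econn). Qed.
Lemma M1E x y : (gd x y == 1%N) = e x y. Proof. exact: (gd1E eirr econn). Qed.
Lemma Mrange x y z : e y z -> ((gd x y).-1 <= gd x z <= (gd x y).+1)%N.
Proof. exact: (gd_edge_range esy econn). Qed.
Lemma Mpred x y j : gd x y = j.+1 -> exists z, e z y /\ gd x z = j.
Proof. exact: (gd_pred econn). Qed.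
Lemma Mtri x y z : e y z -> (gd x z <= (gd x y).+1)%N. Proof. exact: (gd_tri econn). Qed.
Lemma Mlt x y : (gd x y < n)%N. Proof. exact: (gd_lt econn). Qed.
Lemma MCeq x (C : {set 'I_n}) y t : y \in C -> gd x y = t ->
  (forall w, w \in C -> (t <= gd x w)%N) -> gdistC e x C = t.
Proof. exact: (gC_eq econn). Qed.

Lemma deg y : #|[set z | e y z]| = bi 0.
Proof.
have := hbb (x:=y) (y:=y); rewrite Mxx => <- //; last by lia.
apply: eq_card => z; rewrite !in_set; apply/idP/idP => [h|/andP [_ h]].
  by rewrite M1E h.
by rewrite -M1E.
Qed.

Definition kk : R := (bi 0)%:R.
Definition cc j : R := if j == 0%N then 0 else (ci j)%:R.
Definition bb j : R := if (j < D)%N then (bi j)%:R else 0.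
Definition aa j : R := kk - cc j - bb j.

Lemma split3 x y (F : nat -> R) :
  \sum_(z | e y z) F (gd x z) =
    F (gd x y).-1 * #|[set z | e y z & gd x z == (gd x y).-1]|%:R
  + F (gd x y) * #|[set z | e y z & gd x z == gd x y]|%:R
  + F (gd x y).+1 * #|[set z | e y z & gd x z == (gd x y).+1]|%:R.
Proof.
rewrite -!sum_boolR !mulr_sumr -!big_split /=; apply: eq_bigr => z eyz.
have r := Mrange x eyz.
have h0 : gd x y = 0%N -> gd x z = 1%N.
  move/eqP; rewrite Meq0 => /eqP xy; rewrite -xy in eyz.
  exact: Medge eyz.
set d := gd x z in r h0 *; set j := gd x y in r h0 *.
have [h1|h1] := eqVneq d j.-1; have [h2|h2] := eqVneq d j;
  have [h3|h3] := eqVneq d j.+1; rewrite ?mulr1 ?mulr0 ?addr0 ?add0r;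
  try (exfalso; lia); by [rewrite h1|rewrite h2|rewrite h3].
Qed.

Lemma aspher x y (F : nat -> R) :
  \sum_(z | e y z) F (gd x z) =
    cc (gd x y) * F (gd x y).-1 + aa (gd x y) * F (gd x y) + bb (gd x y) * F (gd x y).+1.
Proof.
have N1 : #|[set z | e y z & gd x z == (gd x y).-1]|%:R = cc (gd x y).
  rewrite /cc; case: eqP => [h0|h0]; last by rewrite hc //; lia.
  rewrite (_ : [set z | _ & _] = set0) ?cards0 //; apply/setP => z; rewrite !in_set.
  apply/negP => /andP [eyz /eqP h].
  have xy : x = y by apply/eqP; rewrite -Meq0 h0.
  by move: h; rewrite -xy in eyz *; rewrite Medge // Mxx.
have N2 : #|[set z | e y z & gd x z == (gd x y).+1]|%:R = bb (gd x y).
  rewrite /bb; case: ltnP => [h|h]; first by rewrite hbb.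
  rewrite (_ : [set z | _ & _] = set0) ?cards0 //; apply/setP => z; rewrite !in_set.
  apply/negP => /andP [eyz /eqP h1]; have := gdD x z; have := gdD x y; lia.
have e1 : \sum_(z | e y z) (1:R) = kk by rewrite /kk -(deg y) -sum1dep_card natr_sum.
have := split3 x y (fun _ => 1); rewrite e1 !mul1r => ek.
rewrite split3 N1 N2 /aa ek -N1 -N2; ring.
Qed.

Lemma mulA (v : 'rV[R]_n) y : (v *m adjmx e R) 0 y = \sum_(z | e y z) v 0 z.
Proof.
rewrite mxE [RHS]big_mkcond /=; apply: eq_bigr => z _; rewrite !mxE esy.
by case: (e y z); rewrite ?mulr1 ?mulr0.
Qed.

Lemma Asym (f g : 'I_n -> R) :
  \sum_y f y * (\sum_(z | e y z) g z) = \sum_y (\sum_(z | e y z) f z) * g y.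
Proof.
under eq_bigr => y _ do rewrite mulr_sumr big_mkcond /=.
under [RHS]eq_bigr => y _ do rewrite mulr_suml big_mkcond /=.
rewrite exchange_big /=; apply: eq_bigr => y _; apply: eq_bigr => z _.
by rewrite esy.
Qed.

Local Notation G := (gbr R b).

Lemma G0 : G 0 = 0. Proof. by rewrite /gbr expr0 subrr mul0r. Qed.

Lemma bR1 : 1 < (b%:R : R). Proof. by rewrite ltr1n. Qed.

Lemma Glt i j : (i < j)%N -> G i < G j.
Proof.
move=> ij; rewrite /gbr ltr_pM2r; last by rewrite invr_gt0 subr_gt0 bR1.
rewrite ltrD2r -!natrX ltr_nat ltn_exp2l //; lia.
Qed.

Lemma Gpos j : (0 < j)%N -> 0 < G j.
Proof. by move=> h; rewrite -G0 Glt. Qed.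

Lemma Gge0 j : 0 <= G j.
Proof. by case: j => [|j]; rewrite ?G0 // ltW // Gpos. Qed.

Lemma bRE i : (i < D)%N -> (bi i)%:R = (G D - G i) * (beta - alpha * G i).
Proof. by case: hcp => h _ /h. Qed.

Lemma cRE i : (1 <= i <= D)%N -> (ci i)%:R = G i * (1 + alpha * G i.-1).
Proof. by case: hcp => _ h /h. Qed.

Lemma exdist : exists x0, forall t, (t <= D)%N -> exists y, gd x0 y = t.
Proof.
case: hdr => _ _ [[x0 [y0 h0]] _] _ _; exists x0.
suff H : forall t, (t <= D)%N -> exists y, gd x0 y = (D - t)%N.
  by move=> t tD; have [y hy] := H (D - t)%N (leq_subr _ _); exists y; rewrite hy subKn.
elim => [_|t IH tD]; first by exists y0; rewrite subn0.
have [y hy] := IH (ltnW tD).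
have [z [_ hz]] : exists z, e z y /\ gd x0 z = (D - t.+1)%N by apply: Mpred; rewrite hy; lia.
by exists z.
Qed.

Lemma cpos i : (1 <= i <= D)%N -> (0 < ci i)%N.
Proof.
move=> /andP [i1 iD]; have [x0 H] := exdist; have [y hy] := H i iD.
have [z [ezy hz]] : exists z, e z y /\ gd x0 z = i.-1 by apply: Mpred; rewrite hy; lia.
rewrite -hy -hc ?hy // card_gt0; apply/set0Pn; exists z; rewrite in_set esy ezy hz ?hy /=.
by [].
Qed.

Lemma bpos i : (i < D)%N -> (0 < bi i)%N.
Proof.
move=> iD; have [x0 H] := exdist; have [y hy] := H i.+1 iD.
have [z [ezy hz]] := Mpred hy.
rewrite -hz -hbb ?hz // card_gt0; apply/set0Pn; exists y; by rewrite in_set ezy ?hy ?hz /=.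
Qed.

Lemma P1 i : (i < D)%N -> 0 < beta - alpha * G i.
Proof.
move=> iD; have := bpos iD; rewrite -(ltr0n R) bRE // => h.
have hg : 0 < G D - G i by rewrite subr_gt0 Glt.
by rewrite -(pmulr_rgt0 _ hg).
Qed.

Lemma P2 i : (i < D)%N -> 0 < 1 + alpha * G i.
Proof.
move=> iD; have h : (0 < ci i.+1)%N by apply: cpos; lia.
move: h; rewrite -(ltr0n R) cRE /=; last by lia.
by rewrite pmulr_rgt0 // Gpos.
Qed.

Lemma betapos : 0 < beta.
Proof. by have := P1 (i:=0) ltac:(lia); rewrite G0 mulr0 subr0. Qed.

Lemma kkE : kk = G D * beta.
Proof. by rewrite /kk bRE ?G0 ?mulr0 ?subr0 //; lia. Qed.

Lemma kkpos : 0 < kk.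
Proof. by rewrite kkE mulr_gt0 ?betapos ?Gpos //; lia. Qed.

Lemma bbE j : (j <= D)%N -> bb j = (G D - G j) * (beta - alpha * G j).
Proof.
rewrite /bb leq_eqVlt => /orP [/eqP ->|h]; last by rewrite h bRE.
by rewrite ltnn subrr mul0r.
Qed.

Lemma ccE j : (1 <= j <= D)%N -> cc j = G j * (1 + alpha * G j.-1).
Proof. move=> h; rewrite /cc cRE //; case: eqP => // j0; move: h; rewrite j0 //. Qed.

Lemma bbpos j : (j < D)%N -> 0 < bb j.
Proof. by move=> h; rewrite /bb h ltr0n bpos. Qed.

Lemma ccpos j : (1 <= j <= D)%N -> 0 < cc j.
Proof. move=> h; rewrite /cc; case: eqP => [j0|_]; last by rewrite ltr0n cpos.
by move: h; rewrite j0. Qed.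

Definition th' : R := - G D.
Definition rho i : R := (1 + alpha * G i) / (alpha * G i - beta).

Lemma GDpos : 0 < G D. Proof. by apply: Gpos; lia. Qed.

Lemma rho_neg i : (i < D)%N -> rho i < 0.
Proof.
move=> iD; rewrite /rho pmulr_rlt0 ?P2 // invr_lt0 subr_lt0.
by rewrite -subr_gt0 P1.
Qed.

Lemma dneq i : (i < D)%N -> alpha * G i - beta != 0.
Proof. by move=> iD; rewrite -oppr_eq0 opprB gt_eqF ?P1. Qed.
Lemma nneq i : (i < D)%N -> 1 + alpha * G i != 0.
Proof. by move=> iD; rewrite gt_eqF ?P2. Qed.

Lemma Id0 : kk * rho 0 = th'.
Proof.
rewrite kkE /rho /th' G0 mulr0 addr0 add0r.
have := betapos; rewrite lt0r => /andP [bn _]; by field.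
Qed.

Lemma Idj j : (1 <= j < D)%N -> cc j / rho j.-1 + aa j + bb j * rho j = th'.
Proof.
move=> /andP [j1 jD]; rewrite /aa kkE ccE ?bbE /rho /th'; try lia.
have h1 := dneq (i:=j.-1) ltac:(lia); have h2 := nneq (i:=j.-1) ltac:(lia).
have h3 := dneq jD.
field; by rewrite h1 h2 h3.
Qed.

Lemma IdD : cc D / rho D.-1 + aa D = th'.
Proof.
have bD : bb D = 0 by rewrite /bb ltnn.
rewrite /aa bD kkE ccE /rho /th'; last by lia.
have h1 := dneq (i:=D.-1) ltac:(lia); have h2 := nneq (i:=D.-1) ltac:(lia).
field; by rewrite h1 h2.
Qed.

Fixpoint U (t : R) (j : nat) {struct j} : R :=
  match j with
  | 0 => 1
  | j1.+1 => match j1 with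
             | 0 => t / kk
             | j'.+1 => ((t - aa j1) * U t j1 - cc j1 * U t j') / bb j1
             end
  end.

Lemma U_SS t j : U t j.+2 = ((t - aa j.+1) * U t j.+1 - cc j.+1 * U t j) / bb j.+1.
Proof. by []. Qed.

Lemma kkneq : kk != 0. Proof. by rewrite gt_eqF ?kkpos. Qed.

Lemma Urec t j : (j < D)%N -> cc j * U t j.-1 + aa j * U t j + bb j * U t j.+1 = t * U t j.
Proof.
case: j => [_|j jD].
  have b0 : bb 0 = kk by rewrite /bb; case: ifP => //; lia.
  rewrite /aa b0 /cc /= mul0r add0r; field; exact: kkneq.
rewrite U_SS; have := bbpos jD; rewrite lt0r => /andP [h _]; field; exact: h.
Qed.

Lemma inv_neg_le (x y : R) : x <= y -> y < 0 -> y^-1 <= x^-1.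
Proof.
move=> xy y0; have x0 : x < 0 by apply: le_lt_trans xy y0.
have xy0 : 0 < x * y by rewrite nmulr_rgt0.
have xn : x != 0 by rewrite lt_eqF.
have yn : y != 0 by rewrite lt_eqF.
have e1 : y^-1 = x * (x * y)^-1 by field; rewrite ?xn ?yn.
have e2 : x^-1 = y * (x * y)^-1 by field; rewrite ?xn ?yn.
by rewrite e1 e2 ler_pM2r // invr_gt0.
Qed.

Lemma Ucmp t : t <= th' -> forall j, (j < D)%N ->
  [/\ U t j != 0, U t j.+1 / U t j <= rho j & (t = th' -> U t j.+1 / U t j = rho j)].
Proof.
move=> ht; elim => [_|j IH jD].
  have r0 : rho 0 = th' / kk by rewrite -Id0; field; exact: kkneq.
  rewrite /= divr1 r0 oner_eq0; split => //; last by move=> ->.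
  by rewrite ler_pM2r // invr_gt0 kkpos.
have [h1 h2 h3] := IH (ltnW jD).
set rh := U t j.+1 / U t j in h2 h3.
have rn : rh < 0 by apply: le_lt_trans h2 (rho_neg (ltnW jD)).
have Uj1 : U t j.+1 = rh * U t j by rewrite /rh mulfVK.
have hU : U t j.+1 != 0 by rewrite Uj1 mulf_neq0 // lt_eqF.
have bp := bbpos jD.
have bn : bb j.+1 != 0 by rewrite gt_eqF.
have Id := Idj (j:=j.+1) ltac:(lia).
have eA : bb j.+1 * (U t j.+2 / U t j.+1) = t - aa j.+1 - cc j.+1 / rh.
  rewrite U_SS /rh invf_div; field; by rewrite hU bn.
have eR : bb j.+1 * rho j.+1 = th' - aa j.+1 - cc j.+1 / rho j.
  by rewrite -Id /=; ring.
split => //.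
  rewrite -(ler_pM2l bp) eA eR; apply: lerB; first by apply: lerB.
  rewrite ler_pM2l ?ccpos; last by lia.
  exact: inv_neg_le h2 (rho_neg (ltnW jD)).
  by [].
move=> tt; apply: (mulfI bn); by rewrite eA eR h3 // tt.
Qed.

Definition rr t := cc D * U t D.-1 + (aa D - t) * U t D.

Lemma aDge0 : 0 <= aa D.
Proof.
have [x0 H] := exdist; have [y hy] := H D (leqnn _).
have := aspher x0 y (fun t => (t == D)%:R); rewrite hy eqxx.
have -> : (D.-1 == D) = false by apply/negbTE; lia.
have -> : (D.+1 == D) = false by apply/negbTE; lia.
rewrite !mulr0 mulr1 add0r addr0 => <-; apply: sumr_ge0 => z _; exact: ler0n.
Qed.

Lemma rr_th' : rr th' = 0.
Proof.
have jD : (D.-1 < D)%N by lia.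
have [h1 _ h3] := Ucmp (lexx _) jD.
have eD : D = D.-1.+1 by lia.
have := h3 erefl; rewrite -eD => hr.
have UD : U th' D = rho D.-1 * U th' D.-1 by rewrite -hr mulfVK.
rewrite /rr UD; have := IdD => Id.
have rn : rho D.-1 != 0 by rewrite lt_eqF ?rho_neg.
rewrite -Id; field; by rewrite rn.
Qed.

Lemma rr_lt t : t < th' -> rr t != 0.
Proof.
move=> tl; have jD : (D.-1 < D)%N by lia.
have [h1 h2 _] := Ucmp (ltW tl) jD.
have eD : D = D.-1.+1 by lia.
move: h2; rewrite -eD; set rh := U t D / U t D.-1 => h2.
have UD : U t D = rh * U t D.-1 by rewrite /rh mulfVK.
have rn := rho_neg jD.
have Id : cc D + (aa D - th') * rho D.-1 = 0.
  have := IdD => Id; rewrite -Id; field; by rewrite lt_eqF.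
have ag := aDge0.
have thn : th' < 0 by rewrite /th' oppr_lt0 GDpos.
have k1 : (aa D - t) * rh <= (aa D - t) * rho D.-1.
  by rewrite ler_pM2l // subr_gt0; apply: lt_le_trans (lt_trans tl thn) ag.
have k2 : (aa D - t) * rho D.-1 < (aa D - th') * rho D.-1.
  by rewrite ltr_nM2r // ltrD2l ltrN2.
have neg : cc D + (aa D - t) * rh < 0.
  by rewrite -Id ltrD2l; apply: le_lt_trans k1 k2.
have -> : rr t = (cc D + (aa D - t) * rh) * U t D.-1 by rewrite /rr UD; ring.
by rewrite mulf_neq0 // lt_eqF.
Qed.

Lemma AW t x y : \sum_(z | e y z) U t (gd x z) = t * U t (gd x y) + (gd x y == D)%:R * rr t.
Proof.
rewrite aspher; have := gdD x y; rewrite leq_eqVlt => /orP [/eqP h|h].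
  have bD : bb D = 0 by rewrite /bb ltnn.
  by rewrite h eqxx bD /rr /=; ring.
by rewrite Urec // (ltn_eqF h) mul0r addr0.
Qed.

Lemma some_vertex : exists x0 : 'I_n, True.
Proof. by have [x0 _] := exdist; exists x0. Qed.

Lemma eig_th' : eigenvalue (adjmx e R) th'.
Proof.
have [x0 _] := some_vertex.
apply/eigenvalueP; exists (\row_y U th' (gd x0 y)).
  apply/rowP => y; rewrite mulA !mxE; under eq_bigr do rewrite mxE.
  by rewrite AW rr_th' mulr0 addr0.
apply/negP => /eqP/rowP/(_ x0); rewrite !mxE Mxx /= => /eqP; by rewrite oner_eq0.
Qed.

Lemma eig_ge t : eigenvalue (adjmx e R) t -> th' <= t.
Proof.
move/eigenvalueP => [v hv vn]; rewrite leNgt; apply/negP => tl.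
pose f y := v 0 y.
have hf y : \sum_(z | e y z) f z = t * f y.
  by have := hv; move/rowP/(_ y); rewrite mulA mxE.
have [x fx] : exists x, f x != 0.
  case: (pickP (fun x => f x != 0)) => [x fx|h]; first by exists x.
  case/negP: vn; apply/eqP/rowP => y; have := h y; rewrite !mxE /= => /negbFE/eqP.
  exact: id.
pose g i := \sum_y f y * (gd x y == i)%:R.
have gD : g D = 0.
  have E := Asym f (fun y => U t (gd x y)).
  have L : \sum_y f y * (\sum_(z | e y z) U t (gd x z)) =
           \sum_y f y * (t * U t (gd x y)) + rr t * g D.
    rewrite (eq_bigr (fun y => f y * (t * U t (gd x y)) + rr t * (f y * (gd x y == D)%:R))).
      by rewrite big_split /= -mulr_sumr.
    by move=> y _; rewrite AW; ring.
  have Rr : \sum_y (\sum_(z | e y z) f z) * U t (gd x y) = \sum_y f y * (t * U t (gd x y)).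
    by apply: eq_bigr => y _; rewrite hf; ring.
  move: E; rewrite L Rr => /eqP; rewrite -subr_eq0 addrC addKr mulf_eq0 => /orP [h|/eqP //].
  by move: (rr_lt tl); rewrite h.
have grec i : (1 <= i <= D)%N -> t * g i = cc i.+1 * g i.+1 + aa i * g i + bb i.-1 * g i.-1.
  move=> /andP [i1 iD].
  have E := Asym f (fun y => (gd x y == i)%:R).
  have L : \sum_y f y * (\sum_(z | e y z) (gd x z == i)%:R) =
           cc i.+1 * g i.+1 + aa i * g i + bb i.-1 * g i.-1.
    rewrite (eq_bigr (fun y => cc i.+1 * (f y * (gd x y == i.+1)%:R) +
        aa i * (f y * (gd x y == i)%:R) + bb i.-1 * (f y * (gd x y == i.-1)%:R))).
      by rewrite !big_split /= -!mulr_sumr.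
    move=> y _; rewrite (aspher x y (fun s => (s == i)%:R)) /= indsw //; ring.
  have Rr : \sum_y (\sum_(z | e y z) f z) * (gd x y == i)%:R = t * g i.
    by rewrite mulr_sumr; apply: eq_bigr => y _; rewrite hf mulrA.
  by rewrite -L E Rr.
have gD1 : g D.+1 = 0.
  rewrite /g big1 // => y _; have := gdD x y => h.
  have -> : (gd x y == D.+1) = false by apply/negbTE; lia.
  by rewrite mulr0.
have back s : (s <= D)%N -> g (D - s)%N = 0 /\ g (D - s).+1 = 0.
  elim: s => [_|s IH sD]; first by rewrite subn0.
  have [h1 h2] := IH (ltnW sD).
  have e1 : (D - s)%N = (D - s.+1).+1 by lia.
  split; last by rewrite -e1.
  have := grec (D - s)%N ltac:(lia); rewrite h1 h2 !mulr0 !add0r => /esym/eqP.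
  rewrite mulf_eq0 => /orP [|/eqP]; last by rewrite (_ : (D - s).-1 = (D - s.+1)%N) //; lia.
  by rewrite gt_eqF // bbpos //; lia.
have := back D (leqnn _); rewrite subnn => -[g0 _].
move: g0; rewrite /g (bigD1 x) //= Meq0 eqxx mulr1 big1 ?addr0 => [h|y yx].
  by move: fx; rewrite h eqxx.
by rewrite Meq0 eq_sym (negbTE yx) mulr0.
Qed.

Lemma theta_min t : min_eigenvalue e (R:=R) t -> t = th'.
Proof. by case=> ev hm; apply/le_anti; rewrite (hm _ eig_th') (eig_ge ev). Qed.

Lemma cliqueC C : C \in CC -> clique e C.
Proof. by case: hgeo => h _ /h []. Qed.

Lemma geo1 x y : e x y -> #|[set C in CC | (x \in C) && (y \in C)]| = 1%N.
Proof. by case: hgeo => _ h /h. Qed.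

Lemma cardC C : C \in CC -> #|C|%:R = 1 + beta.
Proof.
case: hgeo => h _ /h [_ [t [/theta_min -> ->]]].
rewrite -/kk kkE /th' opprK; congr (_ + _); field; by rewrite gt_eqF ?GDpos.
Qed.

Lemma mE y : #|[set C in CC | y \in C]|%:R = G D.
Proof.
have E : (bi 0 = \sum_(C | (C \in CC) && (y \in C)) (#|C| - 1))%N.
  rewrite -(deg y) -sum1dep_card.
  rewrite (eq_bigr (fun z => (\sum_(C | (C \in CC) && (y \in C)) (z \in C : nat))%N)); last first.
    move=> z eyz; rewrite sum_bool -(geo1 eyz); apply: eq_card; move=> C; by rewrite !in_set andbA.
  rewrite exchange_big /=; apply: eq_bigr => C /andP [CC' yC].
  rewrite sum_bool (cardsD1 y C) yC add1n subSS subn0; apply: eq_card; move=> z; rewrite !in_set.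
  rewrite in_set1; case: (eqVneq z y) => [->|zy]; first by rewrite eirr.
  rewrite /=; apply/idP/idP => [/andP [eyz ->] //|zC]; rewrite zC andbT.
  by apply: (cliqueC CC') => //; rewrite eq_sym.
have ER : kk = #|[set C in CC | y \in C]|%:R * beta.
  rewrite /kk E natr_sum -sum1dep_card natr_sum mulr_suml.
  apply: eq_bigr => C /andP [CC' yC]; rewrite natrB ?cardC; first by rewrite mul1r; ring.
  by []. by rewrite card_gt0; apply/set0Pn; exists y.
have bn : beta != 0 by rewrite gt_eqF ?betapos.
apply: (mulIf bn); by rewrite -ER kkE.
Qed.

Lemma Nyz y z : #|[set C in CC | (y \in C) && (z \in C)]|%:R =
  (e y z)%:R + G D * (y == z)%:R :> R.
Proof.
case: (eqVneq y z) => [<-|yz].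
  rewrite eirr /= add0r mulr1 -(mE y); congr (_%:R); apply: eq_card => C.
  by rewrite !in_set andbb.
rewrite /= mulr0 addr0; case: (boolP (e y z)) => [eyz|neyz]; first by rewrite geo1.
rewrite (_ : [set _ in _ | _] = set0) ?cards0 //; apply/setP => C; rewrite !in_set.
apply/negP => /andP [CC' /andP [yC zC]]; case/negP: neyz.
exact: (cliqueC CC').
Qed.

Lemma sum_ind_e (g : 'I_n -> R) y : \sum_z (e y z)%:R * g z = \sum_(z | e y z) g z.
Proof. rewrite [RHS]big_mkcond; apply: eq_bigr => z _; by case: (e y z); rewrite ?mul1r ?mul0r. Qed.

Lemma sum_ind_eq (g : 'I_n -> R) y : \sum_z g z * (y == z)%:R = g y.
Proof.
rewrite (bigD1 y) //= eqxx mulr1 big1 ?addr0 // => z zy.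
by rewrite eq_sym (negbTE zy) mulr0.
Qed.

Lemma QF (f : 'I_n -> R) :
  \sum_(C in CC) (\sum_(y in C) f y) ^+ 2 = \sum_y f y * (\sum_(z | e y z) f z + G D * f y).
Proof.
have sq (C : {set 'I_n}) : (\sum_(y in C) f y) ^+ 2 = \sum_y \sum_z f y * f z * ((y \in C) && (z \in C))%:R.
  rewrite expr2 big_distrlr /= big_mkcond /=; apply: eq_bigr => y _.
  rewrite big_mkcond /=; case: (boolP (y \in C)) => yC.
    by rewrite [RHS]big_mkcond /=; apply: eq_bigr => z _; case: (z \in C); rewrite ?mulr1 ?mulr0.
  by rewrite big1 // => z _; rewrite mulr0.
have L : \sum_(C in CC) (\sum_(y in C) f y) ^+ 2 =
    \sum_y \sum_z f y * f z * #|[set C in CC | (y \in C) && (z \in C)]|%:R.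
  rewrite (eq_bigr _ (fun C _ => sq C)).
  rewrite exchange_big /=; apply: eq_bigr => y _; rewrite exchange_big /=; apply: eq_bigr => z _.
  by rewrite -sum_boolR mulr_sumr.
rewrite L; apply: eq_bigr => y _.
rewrite (eq_bigr (fun z => f y * ((e y z)%:R * f z) + G D * f y * (f z * (y == z)%:R))); last first.
  by move=> z _; rewrite Nyz; ring.
by rewrite big_split /= -!mulr_sumr sum_ind_e sum_ind_eq; ring.
Qed.

Lemma csum0 x C : C \in CC -> \sum_(y in C) U th' (gd x y) = 0.
Proof.
move=> CC'; have Q := QF (fun y => U th' (gd x y)).
have R0 : \sum_y U th' (gd x y) * (\sum_(z | e y z) U th' (gd x z) + G D * U th' (gd x y)) = 0.
  rewrite big1 // => y _; rewrite AW rr_th' mulr0 addr0 /th'; ring.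
rewrite R0 in Q.
have := psumr_eq0P (fun (C : {set 'I_n}) _ => sqr_ge0 (\sum_(y in C) U th' (gd x y))) Q CC'.
by move/eqP; rewrite sqrf_eq0 => /eqP.
Qed.

Lemma Dltn : (D < n)%N.
Proof. have [x0 H] := exdist; have [y hy] := H D (leqnn _); by rewrite -hy Mlt. Qed.

Lemma part1 j C x : (j < D)%N -> C \in CC -> gdistC e x C = j ->
  #|[set y in C | gd x y == j]|%:R = 1 + alpha * G j.
Proof.
move=> jD CC' hj.
have [y0 y0C hy0] : exists2 y, y \in C & gdistC e x C = gd x y.
  by apply: gC_att; rewrite hj; apply: ltn_trans jD Dltn.
rewrite hj in hy0.
have rng y : y \in C -> gd x y = j \/ gd x y = j.+1.
  move=> yC; have h1 := gC_le e x yC; rewrite hj in h1.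
  case: (eqVneq y y0) => [->|yy]; first by left.
  have := Mtri x (cliqueC CC' y0C yC ltac:(by rewrite eq_sym)) => h2.
  rewrite -hy0 in h2; lia.
set psi := #|[set y in C | gd x y == j]|.
have S : \sum_(y in C) U th' (gd x y) =
    #|C|%:R * U th' j.+1 + (U th' j - U th' j.+1) * psi%:R.
  rewrite /psi -sum_boolR mulr_sumr mulr_natl -sumr_const -big_split /=.
  apply: eq_bigr => y yC; case: (rng y yC) => ->; rewrite ?eqxx /=.
    by rewrite mulr1; ring.
  by rewrite (_ : (j.+1 == j) = false) ?mulr0 ?addr0 //; lia.
have [h1 _ h3] := Ucmp (lexx th') jD.
have Uj1 : U th' j.+1 = rho j * U th' j by rewrite -(h3 erefl) mulfVK.
have := csum0 x CC'; rewrite S Uj1 cardC // => E.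
have E2 : (1 + beta) * rho j + (1 - rho j) * psi%:R = 0.
  apply: (mulIf h1); rewrite mul0r -E; ring.
have bn : 1 + beta != 0 by rewrite gt_eqF // ltr_wpDl // ?betapos.
clearbody psi.
have dn := dneq jD.
have E3 : (1 + beta) * ((1 + alpha * G j) - psi%:R) =
          (alpha * G j - beta) * ((1 + beta) * rho j + (1 - rho j) * psi%:R).
  rewrite /rho; move: (psi%:R) => P; move: (gbr R b j) dn => g dn; field; by rewrite dn.
move: E3; rewrite E2 mulr0 => /eqP; rewrite mulf_eq0 (negbTE bn) /= subr_eq0 => /eqP.
by move=> ->.
Qed.

Lemma part2 j x y : (1 <= j <= D)%N -> gd x y = j ->
  #|[set C in CC | (x \in C) && (gdistC e y C == j.-1)]|%:R = G j.
Proof.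
move=> /andP [j1 jD] hxy.
set T := [set C in CC | (x \in C) && (gdistC e y C == j.-1)].
set Z := [set z | e x z & gd y z == (gd y x).-1].
have hyx : gd y x = j by rewrite Msym.
have cZ : #|Z| = ci j by rewrite /Z hc hyx.
have inner z : z \in Z -> (\sum_(C in T) (z \in C : nat))%N = 1%N.
  rewrite /Z in_set hyx => /andP [exz /eqP hz].
  rewrite sum_bool -(geo1 exz); apply: eq_card; move=> C; rewrite !in_set.
  apply/idP/idP => [/andP [/andP [CC' /andP [xC _]] zC]|/andP [CC' /andP [xC zC]]].
    by rewrite CC' xC zC.
  rewrite CC' xC zC /= andbT; apply/eqP; apply: (MCeq zC hz) => w wC.
  case: (eqVneq w x) => [->|wx]; first by rewrite hyx; lia.
  have exw : e x w by apply: (cliqueC CC') => //; rewrite eq_sym.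
  have := Mrange y exw; rewrite hyx; lia.
have E : (ci j = \sum_(C in T) #|[set z in C | gd y z == j.-1]|)%N.
  rewrite -cZ -sum1_card (eq_bigr _ (fun z hz => esym (inner z hz))) exchange_big /=.
  apply: eq_bigr => C; rewrite /T in_set => /andP [CC' /andP [xC _]].
  rewrite sum_bool; apply: eq_card; move=> z; rewrite !in_set hyx.
  apply/idP/idP => [/andP [/andP [_ ->] ->] //|/andP [zC hz]].
  rewrite zC hz !andbT; apply: (cliqueC CC') => //.
  by apply/eqP => xz; move: hz; rewrite -xz hyx; lia.
have E2 : (ci j)%:R = #|T|%:R * (1 + alpha * G j.-1).
  rewrite E natr_sum -sum1_card natr_sum mulr_suml; apply: eq_bigr => C.
  rewrite /T in_set => /andP [CC' /andP [xC /eqP hC]].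
  rewrite part1 ?mul1r //; lia.
have pn : 1 + alpha * G j.-1 != 0 by apply: nneq; lia.
apply: (mulIf pn); rewrite -E2 cRE //; lia.
Qed.

End Main.

Unset Implicit Arguments.
Set Strict Implicit.
Local Open Scope ring_scope.

Theorem lemma16 (R : rcfType) (n : nat) (e : rel 'I_n) (D : nat)
  (bi ci : nat -> nat) (b : nat) (alpha beta : R) (CC : {set {set 'I_n}}) :
  distance_regular e D bi ci ->
  classical_params D bi ci b alpha beta ->
  (2 <= b)%N -> (3 <= D)%N ->
  geometric_wrt e R (bi 0) CC ->
  (forall (j : nat) (C : {set 'I_n}) (x : 'I_n), (j < D)%N -> C \in CC ->
     gdistC e x C = j ->
     (#|[set y in C | gdist e x y == j]|%:R : R) = 1 + alpha * gbr R b j) /\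
  (forall (j : nat) (x y : 'I_n), (1 <= j <= D)%N -> gdist e x y = j ->
     (#|[set C in CC | (x \in C) && (gdistC e y C == j.-1)]|%:R : R) = gbr R b j).
Proof.
move=> hdr hcp hb hD hgeo; split.
  move=> j C x jD CC' hj; eapply part1; eassumption.
move=> j x y hj hxy; eapply part2; eassumption.
Qed.
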